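(* For every set $\theta$ of edges of $G$, $H$ is constant on each connected component of $\Gamma_\theta=\{x\in\Gamma: E_x=\theta\}$, where $E_x=\{\{i,j\}\in E: x_{ij}>0\}$.
   Context: Let $G=(\mathbb{V},E)$ be a finite graph with adjacency $\sim$ and edge set $E$. Let $a_{ij}=a_{ji}\ge0$ ($>0$ only if $i\sim j$) and $p_{ij}=p_{ji}\in[0,1]$ ($=0$ if $i\not\sim j$), with some $a_{ij}p_{ij}>0$. Fix $h_1\in(0,1]$; $\Delta$ is the set of arrays $x=(x_{ij})$ with $x_{ij}=x_{ji}\ge0$, $x_{ij}=0$ if $i\not\sim j$, $\sum_{i,j}x_{ij}=1$, $\sum_{(i,j):a_{ij}p_{ij}>0}x_{ij}\ge h_1$; $x_i=\sum_jx_{ij}$. $H(x)=\sum_{(i,j):x_{ij}>0}a_{ij}p_{ij}x_{ij}^2/(x_ix_j)$; $F(x)_{ij}=x_{ij}\big(a_{ij}p_{ij}\frac{x_{ij}}{x_ix_j}-H(x)\big)$, with $F_{ij}=0$ if $x_{ij}=0$ and $a_{ij}p_{ij}x_{ij}/(x_ix_j):=0$ if $a_{ij}p_{ij}=0$. $\Gamma=\{x\in\Delta:F(x)=0\}$. *)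

(* Defs.v *)
From HB Require Import structures.
From mathcomp Require Import all_boot all_order all_algebra.
From mathcomp Require Import all_classical all_reals all_analysis.
Set Implicit Arguments. Unset Strict Implicit. Unset Printing Implicit Defensive.
Import Order.TTheory GRing.Theory Num.Theory.
Import numFieldNormedType.Exports.
Local Open Scope ring_scope.

Section Defs.
Variables (R : realType) (n : nat).

Definition simple_graph (adj : rel 'I_n) : Prop :=
  (forall i j, adj i j = adj j i) /\ (forall i, ~~ adj i i).

Definition xrow (x : 'M[R]_n) (i : 'I_n) : R := \sum_(j < n) x i j.

Definition Hfun (a p x : 'M[R]_n) : R :=
  \sum_(i < n) \sum_(j < n | 0 < x i j)
     a i j * p i j * x i j ^+ 2 / (xrow x i * xrow x j).

Definition Ffun (a p x : 'M[R]_n) : 'M[R]_n :=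
  \matrix_(i, j)
    (if x i j == 0 then 0
     else x i j * (a i j * p i j * x i j / (xrow x i * xrow x j) - Hfun a p x)).

Definition Delta (adj : rel 'I_n) (a p : 'M[R]_n) (h1 : R) : set 'M[R]_n :=
  [set x | (forall i j, x i j = x j i) /\ (forall i j, 0 <= x i j) /\
           (forall i j, ~~ adj i j -> x i j = 0) /\
           \sum_(i < n) \sum_(j < n) x i j = 1 /\
           h1 <= \sum_(i < n) \sum_(j < n | 0 < a i j * p i j) x i j].

Definition Gamma (adj : rel 'I_n) (a p : 'M[R]_n) (h1 : R) : set 'M[R]_n :=
  [set x | Delta adj a p h1 x /\ Ffun a p x = 0].

Definition supp_edges (adj : rel 'I_n) (x : 'M[R]_n) : {set {set 'I_n}} :=
  [set e : {set 'I_n} | [exists i, exists j,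
     [&& e == [set i; j], adj i j & 0 < x i j]]].

Definition Gamma_theta (adj : rel 'I_n) (a p : 'M[R]_n) (h1 : R)
  (theta : {set {set 'I_n}}) : set 'M[R]_n :=
  [set x | Gamma adj a p h1 x /\ supp_edges adj x = theta].

End Defs.

(* Main.v *)
Require Import Defs.
From HB Require Import structures.
From mathcomp Require Import all_boot all_order all_algebra.
From mathcomp Require Import all_classical all_reals all_analysis.
From mathcomp Require Import ring lra.
Require Import Defs.
Import Order.TTheory GRing.Theory Num.Theory.
Import numFieldNormedType.Exports.
Local Open Scope ring_scope.
Local Open Scope classical_set_scope.
Set Implicit Arguments. Unset Strict Implicit.

Section Aux.
Variables (R : realType) (n : nat) (adj : rel 'I_n) (a p : 'M[R]_n) (h1 : R).
Hypothesis h1pos : 0 < h1.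

Lemma xrow_ge (u : 'M[R]_n) : (forall i j, 0 <= u i j) ->
  forall i j, u i j <= xrow u i.
Proof.
move=> u0 i j; rewrite /xrow (bigD1 j) //= lerDl.
by apply: sumr_ge0 => k _.
Qed.

Lemma Gamma_eq u : Gamma adj a p h1 u -> forall i j, 0 < u i j ->
  a i j * p i j * u i j = Hfun a p u * (xrow u i * xrow u j).
Proof.
move=> [[usym [u0 _]] /matrixP F] i j uij.
have := F i j; rewrite !mxE (gt_eqF uij) => /eqP.
rewrite mulf_eq0 (gt_eqF uij) /= subr_eq0 => /eqP E.
have xi : 0 < xrow u i by exact: (lt_le_trans uij (xrow_ge u0 i j)).
have xj : 0 < xrow u j.
  by apply: lt_le_trans uij _; rewrite usym; exact: xrow_ge.
by rewrite -E divfK // mulf_neq0 // gt_eqF.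
Qed.

Lemma H_neq0 u : Gamma adj a p h1 u -> Hfun a p u != 0.
Proof.
move=> G; have G' := G; move: G' => [[usym [u0 [_ [_ hle]]]] _].
apply/negP => /eqP H0.
suff S : \sum_(i < n) \sum_(j < n | 0 < a i j * p i j) u i j = 0.
  by move: hle; rewrite S => hle; move: h1pos; rewrite ltNge hle.
apply: big1 => i _; apply: big1 => j cpos.
have := u0 i j; rewrite le_eqVlt => /orP[/eqP <-//|uij].
have := Gamma_eq G uij; rewrite H0 mul0r => /eqP.
by rewrite mulf_eq0 (gt_eqF cpos) (gt_eqF uij).
Qed.

Lemma row_sum u i : Gamma adj a p h1 u -> xrow u i != 0 ->
  \sum_(j < n | 0 < u i j) xrow u j / (a i j * p i j) = (Hfun a p u)^-1.
Proof.
move=> G xi0; have G' := G; move: G' => [[usym [u0 _]] _].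
have Hn0 := H_neq0 G.
set S := \sum_(j < n | _) _.
have E : xrow u i = Hfun a p u * xrow u i * S.
  rewrite {1}/xrow (bigID (fun j => 0 < u i j)) /=.
  rewrite [X in _ + X]big1 ?addr0; last first.
    move=> j nj; have := u0 i j; rewrite le_eqVlt => /orP[/eqP <-//|uij].
    by rewrite uij in nj.
  rewrite /S mulr_sumr; apply: eq_bigr => j uij.
  have E2 := Gamma_eq G uij.
  have cn0 : a i j * p i j != 0.
    apply/negP => /eqP c0; move: E2; rewrite c0 mul0r => /esym/eqP.
    rewrite !mulf_eq0 (negbTE Hn0) (negbTE xi0) /=.
    have xj : 0 < xrow u j.
      by apply: lt_le_trans uij _; rewrite usym; exact: xrow_ge.
    by rewrite gt_eqF.
  rewrite -[u i j](mulKf cn0) E2.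
  by rewrite mulrC -!mulrA.
have HS : Hfun a p u * S = 1.
  by apply: (mulIf xi0); rewrite mul1r mulrAC -E.
by rewrite -[S](mulKf Hn0) HS mulr1.
Qed.

Lemma key x y : Gamma adj a p h1 x -> Gamma adj a p h1 y ->
  (forall i j, (0 < x i j) = (0 < y i j)) ->
  \sum_(i < n) \sum_(j < n | 0 < y i j) xrow x i * (xrow y j / (a i j * p i j))
  = (Hfun a p y)^-1.
Proof.
move=> Gx Gy supp.
have Gx' := Gx; move: Gx' => [[xsym [x0 [_ [x1 _]]]] _].
have Gy' := Gy; move: Gy' => [[ysym [y0 _]] _].
under eq_bigr => i _ do rewrite -mulr_sumr.
transitivity (\sum_(i < n) xrow x i * (Hfun a p y)^-1).
  apply: eq_bigr => i _.
  case: (eqVneq (xrow y i) 0) => yi; last by rewrite row_sum.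
  suff -> : xrow x i = 0 by rewrite !mul0r.
  have yz : forall j, y i j = 0.
    by move=> j; apply: (psumr_eq0P _ yi) => // k _; exact: y0.
  apply: big1 => j _.
  have := x0 i j; rewrite le_eqVlt => /orP[/eqP <-//|xij].
  by move: xij; rewrite supp yz ltxx.
by rewrite -mulr_suml x1 mul1r.
Qed.

Lemma supp_sub (Hg : simple_graph adj) x y :
  Gamma adj a p h1 x -> Gamma adj a p h1 y ->
  supp_edges adj x = supp_edges adj y -> forall i j, 0 < x i j -> 0 < y i j.
Proof.
move=> [[xsym [x0 [xadj _]]] _] [[ysym _] _] E i j xij.
have aij : adj i j.
  apply/negP => /negP na; by move: xij; rewrite (xadj _ _ na) ltxx.
have : [set i; j]%SET \in supp_edges adj x.
  rewrite inE; apply/existsP; exists i; apply/existsP; exists j.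
  by rewrite eqxx aij xij.
rewrite E inE => /existsP [k /existsP [l /and3P [/eqP e akl vkl]]].
have ik : i \in [set k; l]%SET by rewrite -e set21.
have jk : j \in [set k; l]%SET by rewrite -e set22.
move: ik jk; rewrite !inE => /orP[/eqP ?|/eqP ?] /orP[/eqP ?|/eqP ?]; subst.
- by move: aij; rewrite (negbTE (Hg.2 _)).
- done.
- by rewrite ysym.
- by move: aij; rewrite (negbTE (Hg.2 _)).
Qed.

End Aux.

Theorem lemma8 (R : realType) (n : nat) (adj : rel 'I_n) (a p : 'M[R]_n) (h1 : R)
  (Hg : simple_graph adj)
  (Ha_sym : forall i j, a i j = a j i) (Ha_ge0 : forall i j, 0 <= a i j)
  (Ha_adj : forall i j, (0 < a i j)%R -> adj i j)
  (Hp_sym : forall i j, p i j = p j i)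
  (Hp_01 : forall i j, 0 <= p i j <= 1)
  (Hp_adj : forall i j, ~~ adj i j -> p i j = 0)
  (Hap : exists i j, (0 < a i j * p i j)%R)
  (Hh1 : 0 < h1 <= 1)
  (theta : {set {set 'I_n}}) (x y : 'M[R]_n) :
  Gamma_theta adj a p h1 theta x ->
  connected_component (Gamma_theta adj a p h1 theta) x y ->
  Hfun a p x = Hfun a p y.
Proof.
move=> [Gx Ex] /connected_component_sub [Gy Ey].
have h1pos : 0 < h1 by case/andP: Hh1.
have supp : forall i j, (0 < x i j) = (0 < y i j).
  move=> i j; apply/idP/idP.
  - by apply: (supp_sub Hg Gx Gy); rewrite Ex Ey.
  - by apply: (supp_sub Hg Gy Gx); rewrite Ex Ey.
have Ky := key h1pos Gx Gy supp.
have Kx := key h1pos Gy Gx (fun i j => esym (supp i j)).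
apply: invr_inj; rewrite -Kx -Ky.
have [[xsym _] _] := Gx; have [[ysym _] _] := Gy.
under [LHS]eq_bigr => i _ do rewrite big_mkcond.
under [RHS]eq_bigr => i _ do rewrite big_mkcond.
rewrite exchange_big /=.
apply: eq_bigr => i _; apply: eq_bigr => j _.
rewrite xsym ysym -supp Ha_sym Hp_sym.
rewrite [x j i]xsym; case: ifP => // _; by rewrite mulrCA.
Qed.
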